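(* Let $g=(g_0,g_1,g_2,g_3)\in\mathbb{R}^4$ with $g_0<g_2$ and $g_1<g_3$ be a fixed ground-truth box, and let $L_i\le U_i$ ($i=0,1,2,3$) be real numbers with $L_2>0$ and $L_3>0$. Consider the problem of maximising $\mathrm{IoU}(\mathbf z,g)$ over $\mathbf z=(z_0,z_1,z_2,z_3)\in\mathbb{R}^4$ subject to the constraints $$L_0\le z_0+z_2\le U_0,\qquad L_1\le z_1+z_3\le U_1,\qquad L_2\le z_2-z_0\le U_2,\qquad L_3\le z_3-z_1\le U_3,$$ and let $F$ denote the set of $\mathbf z$ satisfying these constraints. Define the finite sets of planar points $$P^c_x=\Big\{\big(\tfrac{U_0-U_2}{2},\tfrac{U_0+U_2}{2}\big),\big(\tfrac{U_0-L_2}{2},\tfrac{U_0+L_2}{2}\big),\big(\tfrac{L_0-U_2}{2},\tfrac{L_0+U_2}{2}\big),\big(\tfrac{L_0-L_2}{2},\tfrac{L_0+L_2}{2}\big)\Big\},$$ $$P^c_y=\Big\{\big(\tfrac{U_1-U_3}{2},\tfrac{U_1+U_3}{2}\big),\big(\tfrac{U_1-L_3}{2},\tfrac{U_1+L_3}{2}\big),\big(\tfrac{L_1-U_3}{2},\tfrac{L_1+U_3}{2}\big),\big(\tfrac{L_1-L_3}{2},\tfrac{L_1+L_3}{2}\big)\Big\},$$ $$P^{\mathrm{int}}_x=\{(g_0,U_0-g_0),(g_0,L_0-g_0),(g_0,U_2+g_0),(g_0,L_2+g_0),(U_0-g_2,g_2),(L_0-g_2,g_2),(g_2-U_2,g_2),(g_2-L_2,g_2)\},$$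 $$P^{\mathrm{int}}_y=\{(g_1,U_1-g_1),(g_1,L_1-g_1),(g_1,U_3+g_1),(g_1,L_3+g_1),(U_1-g_3,g_3),(L_1-g_3,g_3),(g_3-U_3,g_3),(g_3-L_3,g_3)\},$$ $P^{gt}_x=\{(g_0,g_2)\}$, $P^{gt}_y=\{(g_1,g_3)\}$, and $P_x=P^c_x\cup P^{\mathrm{int}}_x\cup P^{gt}_x$, $P_y=P^c_y\cup P^{\mathrm{int}}_y\cup P^{gt}_y$. Let $P_{z_0}=\{\alpha:(\alpha,\beta)\in P_x\text{ for some }\beta\}$, $P_{z_2}=\{\beta:(\alpha,\beta)\in P_x\text{ for some }\alpha\}$, $P_{z_1}=\{\alpha:(\alpha,\beta)\in P_y\text{ for some }\beta\}$, $P_{z_3}=\{\beta:(\alpha,\beta)\in P_y\text{ for some }\alpha\}$, and $C_s=P_{z_0}\times P_{z_1}\times P_{z_2}\times P_{z_3}$ (a point $(z_0,z_1,z_2,z_3)$ lies in $C_s$ iff $z_i\in P_{z_i}$ for each $i$). Then the maximum of $\mathrm{IoU}(\mathbf z,g)$ over $F$ is attained at a point of $C_s$: if $\mathbf z^*\in F$ maximises $\mathrm{IoU}(\cdot,g)$ over $F$, then there exists $\mathbf z'\in C_s\cap F$ with $\mathrm{IoU}(\mathbf z',g)=\mathrm{IoU}(\mathbf z^*,g)$.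
   Context: Boxes are in corner format $b=(b_0,b_1,b_2,b_3)$ with top-left corner $(b_0,b_1)$ and bottom-right corner $(b_2,b_3)$. The area of a box is $\mathbf a(b)=(b_3-b_1)(b_2-b_0)$. The intersection of boxes $b,b'$ is $\mathbf i(b,b')=(\max(b_0,b'_0),\max(b_1,b'_1),\min(b_2,b'_2),\min(b_3,b'_3))$, and $\mathrm{IoU}(b,b')=\mathbf a(\mathbf i(b,b'))/\big(\mathbf a(b)+\mathbf a(b')-\mathbf a(\mathbf i(b,b'))\big)$. In the paper's setting the constraint bounds arise from interval bounds on predicted box centres ($z_0+z_2$, $z_1+z_3$ equal twice the centre coordinates) and on predicted widths and heights ($z_2-z_0$, $z_3-z_1$), which are positive. *)

(* Defs.v *)
From Stdlib Require Import Reals List.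
Import ListNotations.
Open Scope R_scope.

(* A box in corner format b = (b0,b1,b2,b3): top-left (b0,b1), bottom-right (b2,b3). *)
Record box := mkbox { b0 : R; b1 : R; b2 : R; b3 : R }.

Definition area (b : box) : R := (b3 b - b1 b) * (b2 b - b0 b).

Definition inter (b b' : box) : box :=
  mkbox (Rmax (b0 b) (b0 b')) (Rmax (b1 b) (b1 b'))
        (Rmin (b2 b) (b2 b')) (Rmin (b3 b) (b3 b')).

Definition IoU (b b' : box) : R :=
  area (inter b b') / (area b + area b' - area (inter b b')).

Definition inF (L U : box) (z : box) : Prop :=
  b0 L <= b0 z + b2 z <= b0 U /\
  b1 L <= b1 z + b3 z <= b1 U /\
  b2 L <= b2 z - b0 z <= b2 U /\
  b3 L <= b3 z - b1 z <= b3 U.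

(* Candidate point sets, for one axis: lo/hi bounds on the centre sum (Lc,Uc),
   on the size (Ls,Us), and the ground-truth coordinates (ga, gb). *)
Definition Pc (Lc Uc Ls Us : R) : list (R * R) :=
  [ ((Uc - Us) / 2, (Uc + Us) / 2);
    ((Uc - Ls) / 2, (Uc + Ls) / 2);
    ((Lc - Us) / 2, (Lc + Us) / 2);
    ((Lc - Ls) / 2, (Lc + Ls) / 2) ].

Definition Pint (Lc Uc Ls Us ga gb : R) : list (R * R) :=
  [ (ga, Uc - ga); (ga, Lc - ga); (ga, Us + ga); (ga, Ls + ga);
    (Uc - gb, gb); (Lc - gb, gb); (gb - Us, gb); (gb - Ls, gb) ].

Definition Pgt (ga gb : R) : list (R * R) := [ (ga, gb) ].

Definition Paxis (Lc Uc Ls Us ga gb : R) : list (R * R) :=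
  Pc Lc Uc Ls Us ++ Pint Lc Uc Ls Us ga gb ++ Pgt ga gb.

Definition Px (L U g : box) : list (R * R) :=
  Paxis (b0 L) (b0 U) (b2 L) (b2 U) (b0 g) (b2 g).
Definition Py (L U g : box) : list (R * R) :=
  Paxis (b1 L) (b1 U) (b3 L) (b3 U) (b1 g) (b3 g).

Definition inCs (L U g : box) (z : box) : Prop :=
  In (b0 z) (map fst (Px L U g)) /\
  In (b1 z) (map fst (Py L U g)) /\
  In (b2 z) (map snd (Px L U g)) /\
  In (b3 z) (map snd (Py L U g)).

(* Main.v *)
Require Import Defs.
From Stdlib Require Import Reals Lra List Psatz.
Open Scope R_scope.

Definition LF (f : R -> R) (u v : R) : Prop :=
  exists n0 n1 d0 d1, forall t, u <= t <= v ->
    f t = (n0 + n1 * t) / (d0 + d1 * t) /\ 0 < (n0 + n1 * t) + (d0 + d1 * t).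

Lemma gt_pos (N D h : R) : 0 < D -> h * D < N -> h < N / D.
Proof. intros HD H. assert (E : N / D * D = N) by (field; lra). nra. Qed.

Lemma gt_neg (N D h : R) : D < 0 -> N < h * D -> h < N / D.
Proof. intros HD H. assert (E : N / D * D = N) by (field; lra). nra. Qed.

Lemma seg_in (a b ts x l : R) : a <= ts <= b -> a <= x <= b -> 0 <= l <= 1 ->
  a <= ts + l * (x - ts) <= b.
Proof. intros. destruct (Rle_dec x ts); split; nra. Qed.

Lemma lf1 (f : R -> R) (a b ts : R) : a <= ts <= b -> LF f a b ->
  (forall t, a <= t <= b -> f t <= f ts) -> f a = f ts \/ f b = f ts.
Proof.
  intros Hts [n0 [n1 [d0 [d1 HF]]]] Hmax.
  destruct (Req_dec ts a) as [->|Ha]; [left; reflexivity|].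
  destruct (Req_dec ts b) as [->|Hb]; [right; reflexivity|].
  assert (Hab : a < ts < b) by lra.
  destruct (HF ts ltac:(lra)) as [Efs Ps].
  set (hs := f ts) in *.
  set (Ns := n0 + n1 * ts) in *. set (Ds := d0 + d1 * ts) in *.
  assert (Hfa := HF a ltac:(lra)). assert (Hfb := HF b ltac:(lra)).
  destruct (total_order_T Ds 0) as [[Dneg|Dz]|Dpos].
  -
    assert (Hs0 : Ns = hs * Ds) by (rewrite Efs; field; lra).
    assert (Cl : forall t1, a <= t1 <= b ->
               0 <= (n0 + n1 * t1) - hs * (d0 + d1 * t1)).
    { intros t1 Ht1. destruct (Rle_dec 0 ((n0 + n1 * t1) - hs * (d0 + d1 * t1))) as [r|r]; [exact r|].
      exfalso. destruct (HF t1 Ht1) as [E1 P1].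
      destruct (Rlt_le_dec (d0 + d1 * t1) 0) as [D1n|D1p].
      + assert (hs < f t1) by (rewrite E1; apply gt_neg; lra).
        specialize (Hmax t1 Ht1). lra.
      + set (D1 := d0 + d1 * t1) in *.
        set (l := Ds / (Ds - D1)).
        assert (Hl : 0 < l <= 1).
        { assert (El : l * (Ds - D1) = Ds) by (unfold l; field; lra).
          split; nra. }
        set (m := ts + l * (t1 - ts)).
        assert (Hm : a <= m <= b) by (apply seg_in; lra).
        destruct (HF m Hm) as [_ Pm].
        assert (Dm : d0 + d1 * m = 0).
        { unfold m. replace (d0 + d1 * (ts + l * (t1 - ts))) with (Ds + l * (D1 - Ds)) by (unfold Ds, D1; ring).
          unfold l. field. lra. }
        assert (Phm : (n0 + n1 * m) - hs * (d0 + d1 * m) = l * ((n0 + n1 * t1) - hs * D1)).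
        { unfold m. unfold D1. replace (n0 + n1 * (ts + l * (t1 - ts)) - hs * (d0 + d1 * (ts + l * (t1 - ts))))
            with ((Ns - hs * Ds) + l * ((n0 + n1 * t1) - hs * (d0 + d1 * t1) - (Ns - hs * Ds))) by (unfold Ns, Ds; ring).
          rewrite Hs0. ring. }
        rewrite Dm in Phm, Pm. nra. }
    left. destruct Hfa as [Ea Pa].
    assert (Ca := Cl a ltac:(lra)). assert (Cb := Cl b ltac:(lra)).
    assert (Id : (b - a) * (Ns - hs * Ds) = (b - ts) * ((n0 + n1 * a) - hs * (d0 + d1 * a)) + (ts - a) * ((n0 + n1 * b) - hs * (d0 + d1 * b))) by (unfold Ns, Ds; ring).
    rewrite Hs0 in Id.
    assert (Z : (n0 + n1 * a) - hs * (d0 + d1 * a) = 0) by nra.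
    rewrite Ea. destruct (Req_dec (d0 + d1 * a) 0) as [Dz|Dnz].
    + exfalso. rewrite Dz in Z, Pa. lra.
    + field_simplify_eq; [|exact Dnz]. lra.
  -
    assert (Hs0 : hs = 0) by (rewrite Efs, Dz; apply Rdiv_0_r).
    assert (NsP : 0 < Ns) by lra.
    assert (Bad : forall x, a <= x <= b -> 0 < d0 + d1 * x -> False).
    { intros x Hx Dx. destruct (HF x Hx) as [Ex Px].
      destruct (Rlt_le_dec 0 (n0 + n1 * x)) as [Nx|Nx].
      + assert (0 < f x) by (rewrite Ex; apply Rdiv_pos_pos; lra).
        specialize (Hmax x Hx). lra.
      + set (Nx' := n0 + n1 * x) in *. set (Dx' := d0 + d1 * x) in *.
        set (l := Ns / (2 * (Ns - Nx'))).
        assert (Hl : 0 < l <= 1).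
        { assert (El : l * (2 * (Ns - Nx')) = Ns) by (unfold l; field; lra).
          split; nra. }
        set (m := ts + l * (x - ts)).
        assert (Hm : a <= m <= b) by (apply seg_in; lra).
        destruct (HF m Hm) as [Em Pm].
        assert (Nm : n0 + n1 * m = Ns / 2).
        { unfold m. replace (n0 + n1 * (ts + l * (x - ts))) with (Ns + l * (Nx' - Ns)) by (unfold Ns, Nx'; ring).
          unfold l. field. lra. }
        assert (Dm : d0 + d1 * m = l * Dx').
        { unfold m. replace (d0 + d1 * (ts + l * (x - ts))) with (Ds + l * (Dx' - Ds)) by (unfold Ds, Dx'; ring).
          rewrite Dz. ring. }
        assert (0 < f m) by (rewrite Em, Nm, Dm; apply Rdiv_pos_pos; nra).
        specialize (Hmax m Hm). lra. }
    destruct Hfa as [Ea Pa].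
    destruct (Req_dec (d0 + d1 * a) 0) as [Daz|Danz].
    + left. rewrite Ea, Daz, Rdiv_0_r. lra.
    + exfalso.
      assert (Id : (b - a) * Ds = (b - ts) * (d0 + d1 * a) + (ts - a) * (d0 + d1 * b)) by (unfold Ds; ring).
      rewrite Dz in Id.
      destruct (Rlt_le_dec 0 (d0 + d1 * a)).
      * apply (Bad a); lra.
      * apply (Bad b); [lra|]. nra.
  -
    assert (Hs0 : Ns = hs * Ds) by (rewrite Efs; field; lra).
    assert (Cl : forall t1, a <= t1 <= b ->
               (n0 + n1 * t1) - hs * (d0 + d1 * t1) <= 0).
    { intros t1 Ht1. destruct (Rle_dec ((n0 + n1 * t1) - hs * (d0 + d1 * t1)) 0) as [r|r]; [exact r|].
      exfalso. destruct (HF t1 Ht1) as [E1 P1].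
      destruct (Rlt_le_dec 0 (d0 + d1 * t1)) as [D1p|D1n].
      + assert (hs < f t1) by (rewrite E1; apply gt_pos; lra).
        specialize (Hmax t1 Ht1). lra.
      + set (D1 := d0 + d1 * t1) in *.
        set (l := Ds / (2 * (Ds - D1))).
        assert (Hl : 0 < l <= 1).
        { assert (El : l * (2 * (Ds - D1)) = Ds) by (unfold l; field; lra).
          split; nra. }
        set (m := ts + l * (t1 - ts)).
        assert (Hm : a <= m <= b) by (apply seg_in; lra).
        destruct (HF m Hm) as [Em Pm].
        assert (Dm : d0 + d1 * m = Ds / 2).
        { unfold m. replace (d0 + d1 * (ts + l * (t1 - ts))) with (Ds + l * (D1 - Ds)) by (unfold Ds, D1; ring).
          unfold l. field. lra. }
        assert (Phm : (n0 + n1 * m) - hs * (d0 + d1 * m) = l * ((n0 + n1 * t1) - hs * D1)).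
        { unfold m. unfold D1. replace (n0 + n1 * (ts + l * (t1 - ts)) - hs * (d0 + d1 * (ts + l * (t1 - ts))))
            with ((Ns - hs * Ds) + l * ((n0 + n1 * t1) - hs * (d0 + d1 * t1) - (Ns - hs * Ds))) by (unfold Ns, Ds; ring).
          rewrite Hs0. ring. }
        assert (hs < f m).
        { rewrite Em. apply gt_pos. rewrite Dm. lra. nra. }
        specialize (Hmax m Hm). lra. }
    left. destruct Hfa as [Ea Pa].
    assert (Ca := Cl a ltac:(lra)). assert (Cb := Cl b ltac:(lra)).
    assert (Id : (b - a) * (Ns - hs * Ds) = (b - ts) * ((n0 + n1 * a) - hs * (d0 + d1 * a)) + (ts - a) * ((n0 + n1 * b) - hs * (d0 + d1 * b))) by (unfold Ns, Ds; ring).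
    rewrite Hs0 in Id.
    assert (Z : (n0 + n1 * a) - hs * (d0 + d1 * a) = 0) by nra.
    rewrite Ea. destruct (Req_dec (d0 + d1 * a) 0) as [Dz|Dnz].
    + exfalso. rewrite Dz in Z, Pa. lra.
    + field_simplify_eq; [|exact Dnz]. lra.
Qed.

Lemma sweep3 f a m1 m2 b ts : a <= m1 -> m1 <= m2 -> m2 <= b -> a <= ts <= b ->
  LF f a m1 -> LF f m1 m2 -> LF f m2 b ->
  (forall t, a <= t <= b -> f t <= f ts) ->
  exists e, (e = a \/ e = m1 \/ e = m2 \/ e = b) /\ f e = f ts.
Proof.
  intros h1 h2 h3 Hts L1 L2 L3 Hm.
  destruct (Rle_dec ts m1).
  { destruct (lf1 f a m1 ts ltac:(lra) L1) as [E|E].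
    - intros t Ht. apply Hm. lra.
    - exists a. auto.
    - exists m1. auto. }
  destruct (Rle_dec ts m2).
  { destruct (lf1 f m1 m2 ts ltac:(lra) L2) as [E|E].
    - intros t Ht. apply Hm. lra.
    - exists m1. auto.
    - exists m2. auto. }
  destruct (lf1 f m2 b ts ltac:(lra) L3) as [E|E].
  - intros t Ht. apply Hm. lra.
  - exists m2. auto.
  - exists b. auto.
Qed.

Definition unif (c0 c1 u v : R) : Prop :=
  (forall t, u <= t <= v -> c0 + c1 * t <= 0) \/ (forall t, u <= t <= v -> 0 <= c0 + c1 * t).

Lemma bp c0 c1 a b : a <= b -> exists c, a <= c <= b /\
  (c = a \/ c = b \/ (c1 <> 0 /\ c0 + c1 * c = 0)) /\
  forall u v, a <= u -> u <= v -> v <= b -> (v <= c \/ c <= u) -> unif c0 c1 u v.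
Proof.
  intros Hab. destruct (Req_dec c1 0) as [Z|NZ].
  - exists a. split; [lra|]. split; [auto|]. intros u v _ _ _ _.
    subst c1. destruct (Rle_dec c0 0); [left|right]; intros t _; lra.
  - set (r := - c0 / c1).
    assert (Er : forall t, c0 + c1 * t = c1 * (t - r)) by (intro t; unfold r; field; exact NZ).
    assert (Sg : forall u v, (forall t, u <= t <= v -> r <= t) \/ (forall t, u <= t <= v -> t <= r) -> unif c0 c1 u v).
    { intros u v [H|H]; destruct (Rlt_le_dec 0 c1).
      - right. intros t Ht. rewrite Er. specialize (H t Ht). nra.
      - left. intros t Ht. rewrite Er. specialize (H t Ht). nra.
      - left. intros t Ht. rewrite Er. specialize (H t Ht). nra.
      - right. intros t Ht. rewrite Er. specialize (H t Ht). nra. }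
    destruct (Rle_dec r a).
    + exists a. split; [lra|]. split; [auto|]. intros u v hu huv hv _.
      apply Sg. left. intros; lra.
    + destruct (Rle_dec b r).
      * exists b. split; [lra|]. split; [auto|]. intros u v hu huv hv _.
        apply Sg. right. intros; lra.
      * exists r. split; [lra|]. split.
        { right; right. split; [exact NZ|]. rewrite Er. ring. }
        intros u v hu huv hv [H|H]; apply Sg; [right|left]; intros; lra.
Qed.

Lemma sweep f a b ts p0 p1 q0 q1 :
  a <= ts <= b -> (forall t, a <= t <= b -> f t <= f ts) ->
  (forall u v, a <= u -> u <= v -> v <= b -> unif p0 p1 u v -> unif q0 q1 u v -> LF f u v) ->
  exists e, a <= e <= b /\ f e = f ts /\
    (e = a \/ e = b \/ (p1 <> 0 /\ p0 + p1 * e = 0) \/ (q1 <> 0 /\ q0 + q1 * e = 0)).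
Proof.
  intros Hts Hm HL.
  destruct (bp p0 p1 a b ltac:(lra)) as [c1 [Hc1 [Pc1 Uc1]]].
  destruct (bp q0 q1 a b ltac:(lra)) as [c2 [Hc2 [Pc2 Uc2]]].
  destruct (Rle_dec c1 c2).
  - destruct (sweep3 f a c1 c2 b ts) as [e [He Fe]]; try lra.
    + apply HL; try lra; [apply Uc1|apply Uc2]; lra.
    + apply HL; try lra; [apply Uc1|apply Uc2]; lra.
    + apply HL; try lra; [apply Uc1|apply Uc2]; lra.
    + exact Hm.
    + exists e. split; [lra|]. split; [exact Fe|].
      destruct He as [ -> | [ -> | [ -> | -> ] ] ]; tauto.
  - destruct (sweep3 f a c2 c1 b ts) as [e [He Fe]]; try lra.
    + apply HL; try lra; [apply Uc1|apply Uc2]; lra.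
    + apply HL; try lra; [apply Uc1|apply Uc2]; lra.
    + apply HL; try lra; [apply Uc1|apply Uc2]; lra.
    + exact Hm.
    + exists e. split; [lra|]. split; [exact Fe|].
      destruct He as [ -> | [ -> | [ -> | -> ] ] ]; tauto.
Qed.

Definition inFx (L U : box) (p q : R) : Prop :=
  b0 L <= p + q <= b0 U /\ b2 L <= q - p <= b2 U.

Definition F2 (g : box) (y1 y3 p q : R) : R := IoU (mkbox p y1 q y3) g.

Lemma ix_affine (ga gb p0 dp q0 dq u v : R) :
  unif (p0 - ga) dp u v -> unif (q0 - gb) dq u v ->
  exists X0 X1, forall t, u <= t <= v ->
    Rmin (q0 + t * dq) gb - Rmax (p0 + t * dp) ga = X0 + X1 * t.
Proof.
  intros [Hp|Hp] [Hq|Hq].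
  - exists (q0 - ga), dq. intros t Ht. specialize (Hp t Ht). specialize (Hq t Ht).
    rewrite Rmin_left by nra. rewrite Rmax_right by nra. ring.
  - exists (gb - ga), 0. intros t Ht. specialize (Hp t Ht). specialize (Hq t Ht).
    rewrite Rmin_right by nra. rewrite Rmax_right by nra. ring.
  - exists (q0 - p0), (dq - dp). intros t Ht. specialize (Hp t Ht). specialize (Hq t Ht).
    rewrite Rmin_left by nra. rewrite Rmax_left by nra. ring.
  - exists (gb - p0), (- dp). intros t Ht. specialize (Hp t Ht). specialize (Hq t Ht).
    rewrite Rmin_right by nra. rewrite Rmax_left by nra. ring.
Qed.

Lemma line (g L U : box) (y1 y3 v p0 q0 dp dq a b : R) :
  b0 g < b2 g -> b1 g < b3 g -> 0 < b2 L -> 0 < y3 - y1 ->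
  a <= 0 <= b ->
  (forall t, a <= t <= b -> inFx L U (p0 + t * dp) (q0 + t * dq)) ->
  (forall t, a <= t <= b -> F2 g y1 y3 (p0 + t * dp) (q0 + t * dq) <= v) ->
  F2 g y1 y3 p0 q0 = v ->
  exists e, a <= e <= b /\ F2 g y1 y3 (p0 + e * dp) (q0 + e * dq) = v /\
    (e = a \/ e = b \/ (dp <> 0 /\ p0 + e * dp = b0 g) \/ (dq <> 0 /\ q0 + e * dq = b2 g)).
Proof.
  intros hg0 hg1 hL2 hH hab HF HM H0.
  set (f := fun t => F2 g y1 y3 (p0 + t * dp) (q0 + t * dq)).
  assert (f0 : f 0 = v) by (unfold f; rewrite !Rmult_0_l, !Rplus_0_r; exact H0).
  destruct (sweep f a b 0 (p0 - b0 g) dp (q0 - b2 g) dq) as [e [He [Fe Ce]]].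
  - exact hab.
  - intros t Ht. rewrite f0. apply HM, Ht.
  - intros u w hu huw hw Up Uq.
    destruct (ix_affine (b0 g) (b2 g) p0 dp q0 dq u w Up Uq) as [X0 [X1 HX]].
    set (K := Rmin y3 (b3 g) - Rmax y1 (b1 g)).
    set (H := y3 - y1). set (G := area g).
    assert (HG : 0 < G) by (unfold G, area; nra).
    exists (K * X0), (K * X1), (H * (q0 - p0) + G - K * X0), (H * (dq - dp) - K * X1).
    intros t Ht. destruct (HF t ltac:(lra)) as [_ [Fw _]]. split.
    + unfold f, F2, IoU, area, inter. cbn [b0 b1 b2 b3].
      rewrite (HX t Ht). fold K. fold (area g). fold G.
      unfold Rdiv. f_equal; [ring|]. f_equal. unfold H. ring.
    + replace (K * X0 + K * X1 * t + (H * (q0 - p0) + G - K * X0 + (H * (dq - dp) - K * X1) * t))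
        with (H * ((q0 + t * dq) - (p0 + t * dp)) + G) by ring.
      unfold H. nra.
  - exists e. split; [exact He|]. split; [rewrite <- f0; exact Fe|].
    destruct Ce as [C|[C|[[C1 C2]|[C1 C2]]]]; [left; exact C|right; left; exact C| |].
    + right; right; left. split; [exact C1|]. nra.
    + right; right; right. split; [exact C1|]. nra.
Qed.

Lemma Rmax_or x y : Rmax x y = x \/ Rmax x y = y.
Proof. unfold Rmax; destruct Rle_dec; auto. Qed.
Lemma Rmin_or x y : Rmin x y = x \/ Rmin x y = y.
Proof. unfold Rmin; destruct Rle_dec; auto. Qed.

Ltac inPx := unfold Px, Paxis, Pc, Pint, Pgt; cbn [app];
  repeat (first [left; f_equal; lra | right]).

Lemma step2 (g L U : box) (y1 y3 v p1 q1 : R) :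
  b0 g < b2 g -> b1 g < b3 g -> 0 < b2 L -> 0 < y3 - y1 ->
  (forall p q, inFx L U p q -> F2 g y1 y3 p q <= v) ->
  inFx L U p1 q1 -> F2 g y1 y3 p1 q1 = v ->
  (p1 + q1 = b0 L \/ p1 + q1 = b0 U \/ p1 = b0 g \/ q1 = b2 g) ->
  exists p q, In (p, q) (Px L U g) /\ inFx L U p q /\ F2 g y1 y3 p q = v.
Proof.
  intros hg0 hg1 hL2 hH HM Hf Hv Hc.
  destruct Hf as [Hs Hw].
  destruct Hc as [HS|[HS|[HS|HS]]].
  1,2: destruct (line g L U y1 y3 v p1 q1 (-1) 1 ((b2 L - (q1 - p1)) / 2) ((b2 U - (q1 - p1)) / 2))
      as [e [He [Fe Ce]]];
    [lra|lra|lra|lra|lra| intros t Ht; unfold inFx; lra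
    | intros t Ht; apply HM; unfold inFx; lra | exact Hv |];
    exists (p1 + e * -1), (q1 + e * 1); split; [|split; [unfold inFx; lra|exact Fe]];
    destruct Ce as [C|[C|[[_ C]|[_ C]]]]; inPx.
  - destruct (line g L U y1 y3 v p1 q1 0 1 (Rmax (b0 L - b0 g) (b2 L + b0 g) - q1)
                (Rmin (b0 U - b0 g) (b2 U + b0 g) - q1)) as [e [He [Fe Ce]]];
    try lra.
    + pose proof (Rmax_l (b0 L - b0 g) (b2 L + b0 g)). pose proof (Rmax_r (b0 L - b0 g) (b2 L + b0 g)).
      pose proof (Rmin_l (b0 U - b0 g) (b2 U + b0 g)). pose proof (Rmin_r (b0 U - b0 g) (b2 U + b0 g)).
      destruct (Rmax_or (b0 L - b0 g) (b2 L + b0 g)); destruct (Rmin_or (b0 U - b0 g) (b2 U + b0 g)); lra.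
    + intros t Ht.
      pose proof (Rmax_l (b0 L - b0 g) (b2 L + b0 g)). pose proof (Rmax_r (b0 L - b0 g) (b2 L + b0 g)).
      pose proof (Rmin_l (b0 U - b0 g) (b2 U + b0 g)). pose proof (Rmin_r (b0 U - b0 g) (b2 U + b0 g)).
      unfold inFx; lra.
    + intros t Ht. apply HM.
      pose proof (Rmax_l (b0 L - b0 g) (b2 L + b0 g)). pose proof (Rmax_r (b0 L - b0 g) (b2 L + b0 g)).
      pose proof (Rmin_l (b0 U - b0 g) (b2 U + b0 g)). pose proof (Rmin_r (b0 U - b0 g) (b2 U + b0 g)).
      unfold inFx; lra.
    + exists (p1 + e * 0), (q1 + e * 1).
      pose proof (Rmax_l (b0 L - b0 g) (b2 L + b0 g)). pose proof (Rmax_r (b0 L - b0 g) (b2 L + b0 g)).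
      pose proof (Rmin_l (b0 U - b0 g) (b2 U + b0 g)). pose proof (Rmin_r (b0 U - b0 g) (b2 U + b0 g)).
      split; [|split; [unfold inFx; lra|exact Fe]].
      destruct Ce as [C|[C|[[C' _]|[_ C]]]].
      * destruct (Rmax_or (b0 L - b0 g) (b2 L + b0 g)) as [R|R]; rewrite R in C; inPx.
      * destruct (Rmin_or (b0 U - b0 g) (b2 U + b0 g)) as [R|R]; rewrite R in C; inPx.
      * lra.
      * inPx.
  - destruct (line g L U y1 y3 v p1 q1 1 0 (Rmax (b0 L - b2 g) (b2 g - b2 U) - p1)
                (Rmin (b0 U - b2 g) (b2 g - b2 L) - p1)) as [e [He [Fe Ce]]];
    try lra.
    + pose proof (Rmax_l (b0 L - b2 g) (b2 g - b2 U)). pose proof (Rmax_r (b0 L - b2 g) (b2 g - b2 U)).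
      pose proof (Rmin_l (b0 U - b2 g) (b2 g - b2 L)). pose proof (Rmin_r (b0 U - b2 g) (b2 g - b2 L)).
      destruct (Rmax_or (b0 L - b2 g) (b2 g - b2 U)); destruct (Rmin_or (b0 U - b2 g) (b2 g - b2 L)); lra.
    + intros t Ht.
      pose proof (Rmax_l (b0 L - b2 g) (b2 g - b2 U)). pose proof (Rmax_r (b0 L - b2 g) (b2 g - b2 U)).
      pose proof (Rmin_l (b0 U - b2 g) (b2 g - b2 L)). pose proof (Rmin_r (b0 U - b2 g) (b2 g - b2 L)).
      unfold inFx; lra.
    + intros t Ht. apply HM.
      pose proof (Rmax_l (b0 L - b2 g) (b2 g - b2 U)). pose proof (Rmax_r (b0 L - b2 g) (b2 g - b2 U)).
      pose proof (Rmin_l (b0 U - b2 g) (b2 g - b2 L)). pose proof (Rmin_r (b0 U - b2 g) (b2 g - b2 L)).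
      unfold inFx; lra.
    + exists (p1 + e * 1), (q1 + e * 0).
      pose proof (Rmax_l (b0 L - b2 g) (b2 g - b2 U)). pose proof (Rmax_r (b0 L - b2 g) (b2 g - b2 U)).
      pose proof (Rmin_l (b0 U - b2 g) (b2 g - b2 L)). pose proof (Rmin_r (b0 U - b2 g) (b2 g - b2 L)).
      split; [|split; [unfold inFx; lra|exact Fe]].
      destruct Ce as [C|[C|[[_ C]|[C' _]]]].
      * destruct (Rmax_or (b0 L - b2 g) (b2 g - b2 U)) as [R|R]; rewrite R in C; inPx.
      * destruct (Rmin_or (b0 U - b2 g) (b2 g - b2 L)) as [R|R]; rewrite R in C; inPx.
      * inPx.
      * lra.
Qed.

Lemma xstep (g L U zs : box) :
  b0 g < b2 g -> b1 g < b3 g -> 0 < b2 L -> 0 < b3 L ->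
  inF L U zs -> (forall z, inF L U z -> IoU z g <= IoU zs g) ->
  exists p q, In (p, q) (Px L U g) /\ inF L U (mkbox p (b1 zs) q (b3 zs)) /\
     IoU (mkbox p (b1 zs) q (b3 zs)) g = IoU zs g.
Proof.
  intros hg0 hg1 hL2 hL3 HF HM.
  destruct zs as [z0 z1 z2 z3]. cbn [b0 b1 b2 b3] in *.
  set (v := IoU (mkbox z0 z1 z2 z3) g) in *.
  destruct HF as [Hs [Hy1 [Hw Hy3]]]. cbn [b0 b1 b2 b3] in *.
  assert (HMx : forall p q, inFx L U p q -> F2 g z1 z3 p q <= v).
  { intros p q [h1 h2]. apply HM. repeat split; cbn; lra. }
  assert (hH : 0 < z3 - z1) by lra.
  destruct (line g L U z1 z3 v z0 z2 1 1 ((b0 L - (z0 + z2)) / 2) ((b0 U - (z0 + z2)) / 2))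
    as [e [He [Fe Ce]]]; try lra.
  - intros t Ht; unfold inFx; lra.
  - intros t Ht; apply HMx; unfold inFx; lra.
  - reflexivity.
  - assert (Hd : (z0 + e * 1) + (z2 + e * 1) = b0 L \/ (z0 + e * 1) + (z2 + e * 1) = b0 U \/
                 z0 + e * 1 = b0 g \/ z2 + e * 1 = b2 g).
    { destruct Ce as [C|[C|[[_ C]|[_ C]]]];
      [left; lra|right; left; lra|right; right; left; lra|right; right; right; lra]. }
    assert (Hfx : inFx L U (z0 + e * 1) (z2 + e * 1)) by (unfold inFx; lra).
    destruct (step2 g L U z1 z3 v (z0 + e * 1) (z2 + e * 1) hg0 hg1 hL2 hH HMx Hfx Fe Hd)
      as [p [q [Hin [Hf Hv]]]].
    exists p, q. split; [exact Hin|]. split; [|exact Hv].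
    destruct Hf. repeat split; cbn; lra.
Qed.

Definition swapb (z : box) : box := mkbox (b1 z) (b0 z) (b3 z) (b2 z).

Lemma IoU_swap z g : IoU (swapb z) (swapb g) = IoU z g.
Proof. unfold IoU, area, inter, swapb; cbn. unfold Rdiv. f_equal; [ring|]. f_equal. ring. Qed.

Lemma inF_swap L U z : inF (swapb L) (swapb U) (swapb z) <-> inF L U z.
Proof. unfold inF, swapb; cbn. tauto. Qed.

Lemma swapK z : swapb (swapb z) = z.
Proof. destruct z; reflexivity. Qed.

Theorem theorem2 (g L U : box) :
  b0 g < b2 g -> b1 g < b3 g ->
  b0 L <= b0 U -> b1 L <= b1 U -> b2 L <= b2 U -> b3 L <= b3 U ->
  0 < b2 L -> 0 < b3 L ->
  forall zstar : box,
    inF L U zstar ->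
    (forall z : box, inF L U z -> IoU z g <= IoU zstar g) ->
    exists z' : box, inCs L U g z' /\ inF L U z' /\ IoU z' g = IoU zstar g.
Proof.
  intros hg0 hg1 _ _ _ _ hL2 hL3 zs HF HM.
  destruct (xstep g L U zs hg0 hg1 hL2 hL3 HF HM) as [p [q [Hin [Hf Hv]]]].
  set (z1 := mkbox p (b1 zs) q (b3 zs)) in *.
  assert (HM1 : forall z, inF L U z -> IoU z g <= IoU z1 g) by (intros; rewrite Hv; auto).
  destruct (xstep (swapb g) (swapb L) (swapb U) (swapb z1)) as [r [s [Hin2 [Hf2 Hv2]]]];
    cbn [swapb b0 b1 b2 b3]; try lra.
  - apply inF_swap. exact Hf.
  - intros z Hz. rewrite <- (swapK z) in Hz |- *. rewrite inF_swap in Hz.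
    rewrite !IoU_swap. apply HM1, Hz.
  - exists (mkbox p r q s). cbn [b1 b3 z1 swapb] in *.
    split; [|split].
    + unfold inCs; cbn [b0 b1 b2 b3].
      split; [apply (in_map fst _ (p, q)), Hin|].
      split; [apply (in_map fst _ (r, s)), Hin2|].
      split; [apply (in_map snd _ (p, q)), Hin|].
      apply (in_map snd _ (r, s)), Hin2.
    + apply inF_swap in Hf2. exact Hf2.
    + transitivity (IoU z1 g); [|exact Hv].
      rewrite <- (IoU_swap (mkbox p r q s) g), <- (IoU_swap z1 g). exact Hv2.
Qed.
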